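(* In the two-period setting of the context, assume $\frac{\hat\ell_n^P}{E_n}+\frac12\ge\frac{\hat\ell^P}{E}$ for all $n$. For $\alpha\in[0,1]$ let $\mathrm{SC}^{\mathrm{DP}}_\alpha$ denote the social cost $\sum_{n}f_n^\alpha(\boldsymbol\ell)$ evaluated at a Nash equilibrium $\boldsymbol\ell$ of $\mathcal G^{\mathrm{DP}}_\alpha$. Then $\mathrm{SC}^{\mathrm{DP}}_\alpha=(1-\alpha)\big[\frac{E^2}{2}+\frac{D^2}{2}(\alpha^2+V_E(1-\alpha)\alpha)\big]$ with $D=\hat\ell^P-\hat\ell^O$ and $V_E=\sum_n E_n^2/E^2$, and $\alpha\mapsto\mathrm{SC}^{\mathrm{DP}}_\alpha$ is a decreasing function of $\alpha$ on $[0,1]$.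
   Context: Two-period setting: users $\mathcal N=\{1,\dots,N\}$, periods $\mathcal H=\{P,O\}$. Each user $n$ has energy demand $E_n>0$ and preferred profile $(\hat\ell_n^P,\hat\ell_n^O)$ with $\hat\ell_n^h\ge0$, $\hat\ell_n^P+\hat\ell_n^O=E_n$; $E=\sum_nE_n$, $\hat\ell^h=\sum_n\hat\ell_n^h$, and $\hat\ell^P\ge\frac E2\ge\hat\ell^O$. Feasible set $\mathcal L_n=\{(\ell_n^P,\ell_n^O):\ell_n^P+\ell_n^O=E_n,\ \ell_n^P,\ell_n^O\ge0\}$, $\ell^h=\sum_n\ell_n^h$. Costs $C_h(x)=x^2$, utilities $u_n(\boldsymbol\ell_n)=-\sum_h(\ell_n^h-\hat\ell_n^h)^2$. DP bill $b_n^{\mathrm{DP}}=\frac{E_n}{E}((\ell^P)^2+(\ell^O)^2)$. In $\mathcal G^{\mathrm{DP}}_\alpha$ user $n$ minimizes $f_n^\alpha=(1-\alpha)b_n^{\mathrm{DP}}-\alpha u_n(\boldsymbol\ell_n)$ over $\mathcal L_n$. (For $\alpha\in(0,1]$ the equilibrium is unique; for $\alpha=0$ all equilibria have the same social cost $E^2/2$.) *)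

(* Defs.v *)
From mathcomp Require Import all_boot all_order all_algebra.
Set Implicit Arguments. Unset Strict Implicit. Unset Printing Implicit Defensive.
Import Order.TTheory GRing.Theory Num.Theory.
Local Open Scope ring_scope.

Section DP.
Variables (R : realFieldType) (N : nat).
(* Users are indexed by 'I_N; the two periods P (peak) and O (off-peak) are
   represented by two separate load vectors. *)
Variables (E hlP hlO : 'I_N -> R).

Definition Etot : R := \sum_(n < N) E n.
Definition totload (l : 'I_N -> R) : R := \sum_(n < N) l n.

Definition feasible (n : 'I_N) (p o : R) : Prop := p + o = E n /\ 0 <= p /\ 0 <= o.

Definition bill_DP (n : 'I_N) (lP lO : 'I_N -> R) : R :=
  E n / Etot * ((totload lP) ^+ 2 + (totload lO) ^+ 2).

Definition util (n : 'I_N) (p o : R) : R :=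
  - ((p - hlP n) ^+ 2 + (o - hlO n) ^+ 2).

Definition fobj (a : R) (n : 'I_N) (lP lO : 'I_N -> R) : R :=
  (1 - a) * bill_DP n lP lO - a * util n (lP n) (lO n).

Definition upd (l : 'I_N -> R) (n : 'I_N) (x : R) : 'I_N -> R :=
  fun m => if m == n then x else l m.

Definition is_NE (a : R) (lP lO : 'I_N -> R) : Prop :=
  (forall n, feasible n (lP n) (lO n)) /\
  (forall n p o, feasible n p o ->
     fobj a n lP lO <= fobj a n (upd lP n p) (upd lO n o)).

Definition SC (a : R) (lP lO : 'I_N -> R) : R := \sum_(n < N) fobj a n lP lO.

Definition Dgap : R := totload hlP - totload hlO.
Definition VE : R := (\sum_(n < N) E n ^+ 2) / Etot ^+ 2.

Definition SC_formula (a : R) : R :=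
  (1 - a) * (Etot ^+ 2 / 2 + Dgap ^+ 2 / 2 * (a ^+ 2 + VE * (1 - a) * a)).
End DP.

(* Main.v *)
Require Import Defs.
From mathcomp Require Import all_boot all_order all_algebra.
From mathcomp Require Import ring lra.
Import Order.TTheory GRing.Theory Num.Theory.
Local Open Scope ring_scope.

Lemma totload_upd (R : realFieldType) (N : nat) (l : 'I_N -> R) n x :
  totload (upd l n x) = totload l - l n + x.
Proof.
rewrite /totload (bigD1 n) //= [in RHS](bigD1 n) //= /upd eqxx.
have -> : \sum_(m < N | m != n) (if m == n then x else l m) = \sum_(m < N | m != n) l m.
  by apply: eq_bigr => m /negbTE ->.
ring.
Qed.

Lemma lin_lem (R : realFieldType) (A B : R) :
  (forall s, 0 < s -> s <= 1 -> 0 <= s * A + s ^+ 2 * B) -> 0 <= A.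
Proof.
move=> H; rewrite leNgt; apply/negP => A0.
have [B0|B0] := lerP B 0.
  have := H 1 ltr01 (lexx _). nra.
have sp : 0 < - A / (- A + B) by apply: divr_gt0; lra.
have s1 : - A / (- A + B) <= 1 by rewrite ler_pdivrMr; lra.
have := H _ sp s1.
have -> : - A / (- A + B) * A + (- A / (- A + B)) ^+ 2 * B
   = - A / (- A + B) * (- A * B / (- A + B) + A * (- A + B) / (- A + B)) .
  field; lra.
rewrite -mulrDl.
have -> : - A * B + A * (- A + B) = - (A * A) by ring.
move=> h.
have : 0 < - A / (- A + B) * ((A * A) / (- A + B)).
  apply: mulr_gt0 => //. apply: divr_gt0; nra.
rewrite mulNr in h. lra.
Qed.

Lemma Etot_gt0 (R : realFieldType) (N : nat) (E : 'I_N -> R) :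
  (0 < N)%N -> (forall n, 0 < E n) -> 0 < Etot E.
Proof.
move=> HN Ep; rewrite /Etot (bigD1 (Ordinal HN)) //=.
have := Ep (Ordinal HN).
have : 0 <= \sum_(i < N | i != Ordinal HN) E i by apply: sumr_ge0 => i _; apply/ltW.
lra.
Qed.

Lemma le_Etot (R : realFieldType) (N : nat) (E : 'I_N -> R) n :
  (forall n, 0 < E n) -> E n <= Etot E.
Proof.
move=> Ep; rewrite /Etot (bigD1 n) //=.
have : 0 <= \sum_(i < N | i != n) E i by apply: sumr_ge0 => i _; apply/ltW.
lra.
Qed.

Lemma sq_le (R : realFieldType) (N : nat) (E : 'I_N -> R) :
  (forall n, 0 < E n) -> \sum_(n < N) E n ^+ 2 <= Etot E ^+ 2.
Proof.
move=> Ep.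
have -> : Etot E ^+ 2 = \sum_(n < N) E n * Etot E by rewrite -mulr_suml expr2.
apply: ler_sum => n _. rewrite expr2; apply: ler_wpM2l; first exact/ltW.
exact: le_Etot.
Qed.
Lemma key (R : realFieldType) (N : nat) (E hlP hlO : 'I_N -> R) :
  (0 < N)%N ->
  (forall n, 0 < E n) ->
  (forall n, 0 <= hlP n) -> (forall n, 0 <= hlO n) ->
  (forall n, hlP n + hlO n = E n) ->
  Etot E / 2 <= totload hlP -> totload hlO <= Etot E / 2 ->
  (forall n, totload hlP / Etot E <= hlP n / E n + 1 / 2) ->
  (forall (a : R) (lP lO : 'I_N -> R), 0 <= a <= 1 ->
     is_NE E hlP hlO a lP lO ->
     SC E hlP hlO a lP lO = SC_formula E hlP hlO a).
Proof.
move=> HN Ep hPp hOp hsum hPge hOle hcond a lP lO /andP[a0 a1] [feas NE].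
have Etp := @Etot_gt0 _ _ E HN Ep.
have Etn : Etot E != 0 by rewrite gt_eqF.
set Et := Etot E in Etp Etn hPge hOle hcond *.
have hHPO : totload hlP + totload hlO = Et.
  by rewrite /totload -big_split /=; apply: eq_bigr => n _; rewrite hsum.
have hLPO : totload lP + totload lO = Et.
  by rewrite /totload -big_split /=; apply: eq_bigr => n _; case: (feas n).
set HP := totload hlP in hPge hHPO hcond *.
set LP := totload lP in hLPO *.
have hu : 0 <= HP / Et - 1 / 2.
  have -> : HP / Et - 1 / 2 = (HP - Et / 2) / Et by field.
  apply: divr_ge0; lra.
pose k := - (1 - a) * (HP / Et - 1 / 2).
have k0 : k <= 0 by rewrite /k mulNr oppr_le0; apply: mulr_ge0; lra.
have hk : k = - (1 - a) * (HP / Et - 1 / 2) by [].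
clearbody k.
pose t n := hlP n + k * E n - lP n.
have hd : forall n, lP n - hlP n = k * E n - t n by move=> n; rewrite /t; ring.
clearbody t.
have pstar0 : forall n, 0 <= hlP n + k * E n.
  move=> n; have Enp := Ep n.
  have := hcond n; set r := hlP n / E n => hr.
  have -> : hlP n = r * E n by rewrite /r divfK // gt_eqF.
  have : 0 <= a * (HP / Et - 1 / 2) by apply: mulr_ge0.
  rewrite hk in k0 *. nra.
have ostar0 : forall n, 0 <= E n - (hlP n + k * E n).
  move=> n; have := hsum n; have := hOp n; have := Ep n. nra.
set LO := totload lO in hLPO *.
pose g n := (1 - a) * (E n / Et) * (LP - LO) + 2 * a * (lP n - hlP n).
have tg : forall n, 0 <= t n * g n.
  move=> n.
  have [fs [fp fo]] := feas n.
  have hlOn : hlO n = E n - hlP n by rewrite -(hsum n); ring.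
  have lOn : lO n = E n - lP n by rewrite -fs; ring.
  suff : 0 <= 2 * (t n * g n) by rewrite pmulr_rge0.
  apply: (@lin_lem _ _ (2 * t n ^+ 2 * ((1 - a) * (E n / Et) + a))) => s s0 s1.
  have fz : feasible E n (lP n + s * t n) (lO n - s * t n).
    split; first by rewrite -fs; ring.
    have := pstar0 n; have := ostar0 n; have := hd n.
    split; nra.
  have := NE n _ _ fz.
  rewrite /fobj /bill_DP /util !totload_upd /upd !eqxx -/LP -/LO.
  rewrite /g lOn hlOn.
  set w := E n / Et.
  move=> h. rewrite -subr_ge0 in h.
  apply: (le_trans h); rewrite le_eqVlt; apply/orP; left; apply/eqP.
  ring.
pose C := (1 - a) * (LP - LO) / Et + 2 * a * k.
have pw : forall n, t n * g n / E n = t n * C - 2 * a * (t n ^+ 2 / E n).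
  move=> n; rewrite /g /C /= hd; field.
  by rewrite gt_eqF.
have ht : forall n, t n = hlP n + k * E n - lP n by move=> n; have := hd n; lra.
have hT : \sum_(n < N) t n = HP + k * Et - LP.
  rewrite (eq_bigr _ (fun n _ => ht n)) sumrB big_split /= -mulr_sumr //.
set T := \sum_(n < N) t n in hT.
have hC : C = - 2 * (1 - a) * T / Et.
  have hLO : LO = Et - LP by rewrite -hLPO; ring.
  have hLP : LP = HP + k * Et - T by rewrite hT; ring.
  by rewrite /C hLO hLP hk; field.
have sumineq : 0 <= \sum_(n < N) t n * g n / E n.
  by apply: sumr_ge0 => n _; apply: divr_ge0; [apply: tg | apply/ltW].
rewrite (eq_bigr _ (fun n _ => pw n)) big_split /= sumrN -mulr_suml -mulr_sumr in sumineq.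
set Q := \sum_(n < N) t n ^+ 2 / E n in sumineq.
have Q0 : 0 <= Q by apply: sumr_ge0 => n _; apply: divr_ge0; [apply: sqr_ge0 | apply/ltW].
rewrite -/T hC in sumineq.
have X0 : 0 <= (1 - a) * T ^+ 2 / Et by apply: divr_ge0; [apply: mulr_ge0; [lra|apply: sqr_ge0]|apply/ltW].
have Y0 : 0 <= a * Q by apply: mulr_ge0.
have hsi : T * (- 2 * (1 - a) * T / Et) - 2 * a * Q = - 2 * ((1 - a) * T ^+ 2 / Et) - 2 * (a * Q) by ring.
rewrite hsi in sumineq.
have X00 : (1 - a) * T ^+ 2 / Et = 0 by lra.
have Y00 : a * Q = 0 by lra.
have T0 : (1 - a) * T = 0.
  apply/eqP; rewrite -sqrf_eq0; apply/eqP.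
  have : (1 - a) * T ^+ 2 = 0 by move/eqP: X00; rewrite mulf_eq0 invr_eq0 (negbTE Etn) orbF => /eqP.
  move=> h; rewrite exprMn expr2 -mulrA h mulr0 //.
have at0 : forall n, a * t n = 0.
  move=> n; have [->|an0] := eqVneq a 0; first by rewrite mul0r.
  have Q00 : Q = 0 by move: Y00 => /eqP; rewrite mulf_eq0 (negbTE an0) => /eqP.
  have h0 : forall i : 'I_N, true -> 0 <= t i ^+ 2 / E i.
    by move=> i _; apply: divr_ge0; [apply: sqr_ge0 | apply/ltW].
  have /eqP := @psumr_eq0P _ _ _ (fun n => t n ^+ 2 / E n) h0 Q00 n isT.
  rewrite mulf_eq0 invr_eq0 (gt_eqF (Ep n)) orbF sqrf_eq0 => /eqP ->; rewrite mulr0 //.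
have pw2 : forall n, fobj E hlP hlO a n lP lO
    = (1 - a) * (LP ^+ 2 + LO ^+ 2) / Et * E n + 2 * a * k ^+ 2 * E n ^+ 2.
  move=> n.
  have [fs _] := feas n.
  have hlOn : hlO n = E n - hlP n by rewrite -(hsum n); ring.
  have lOn : lO n = E n - lP n by rewrite -fs; ring.
  rewrite /fobj /bill_DP /util -/LP -/LO -/Et lOn hlOn.
  rewrite (_ : E n - lP n - (E n - hlP n) = - (lP n - hlP n)); last by ring.
  rewrite sqrrN hd mulrN.
  have -> : a * ((k * E n - t n) ^+ 2 + (k * E n - t n) ^+ 2)
     = 2 * a * k ^+ 2 * E n ^+ 2 - 4 * k * E n * (a * t n) + 2 * t n * (a * t n) by ring.
  rewrite at0; ring.
rewrite /SC (eq_bigr _ (fun n _ => pw2 n)) big_split /= -!mulr_sumr.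
have -> : \sum_(n < N) E n = Et by [].
rewrite /SC_formula /Dgap /VE -/Et -/HP.
have hHO : totload hlO = Et - HP by rewrite -hHPO; ring.
have hLO : LO = Et - LP by rewrite -hLPO; ring.
have hLP : LP = HP + k * Et - T by rewrite hT; ring.
rewrite hHO hLO hLP.
set M := HP + k * Et.
have -> : (1 - a) * ((M - T) ^+ 2 + (Et - (M - T)) ^+ 2)
   = (1 - a) * (M ^+ 2 + (Et - M) ^+ 2) + ((1 - a) * T) * (2 * T + 2 * Et - 4 * M) by ring.
rewrite T0 /M hk.
by field.
Qed.
Lemma mono (R : realFieldType) (Et W V a b : R) : 0 < Et -> 0 <= W -> W <= Et ^+ 2 ->
  0 <= V -> V <= 1 -> 0 <= a -> a < b -> b <= 1 ->
  (1 - b) * (Et ^+ 2 / 2 + W / 2 * (b ^+ 2 + V * (1 - b) * b)) <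
  (1 - a) * (Et ^+ 2 / 2 + W / 2 * (a ^+ 2 + V * (1 - a) * a)).
Proof.
move=> Et0 W0 W1 V0 V1 a0 ab b1.
set H := V + (1 - 2 * V) * (a + b) - (1 - V) * (a ^+ 2 + a * b + b ^+ 2).
have hid : (1 - a) * (Et ^+ 2 / 2 + W / 2 * (a ^+ 2 + V * (1 - a) * a)) -
  (1 - b) * (Et ^+ 2 / 2 + W / 2 * (b ^+ 2 + V * (1 - b) * b)) = (b - a) / 2 * (Et ^+ 2 - W * H).
  rewrite /H; ring.
have X0 : 0 < 1 - (a + b) + (a ^+ 2 + a * b + b ^+ 2) by nra.
have s0 : 0 < a + b by lra.
have h1 : 1 - H = (1 - V) * (1 - (a + b) + (a ^+ 2 + a * b + b ^+ 2)) + V * (a + b) by rewrite /H; ring.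
have H1 : 0 < 1 - H.
  rewrite h1.
  have [V1'|V1'] := ltrP V 1.
    have : 0 < (1 - V) * (1 - (a + b) + (a ^+ 2 + a * b + b ^+ 2)) by apply: mulr_gt0; lra.
    have : 0 <= V * (a + b) by apply: mulr_ge0; lra.
    lra.
  have -> : V = 1 by lra.
  lra.
have P : 0 < Et ^+ 2 - W * H.
  have E2 : 0 < Et ^+ 2 by apply: exprn_gt0.
  have [H0|H0] := lerP H 0.
    have : W * H <= 0 by apply: mulr_ge0_le0.
    lra.
  have : W * H <= Et ^+ 2 * H by apply: ler_wpM2r; lra.
  have : Et ^+ 2 * H < Et ^+ 2 by rewrite -subr_gt0 -{1}(mulr1 (Et ^+ 2)) -mulrBr; apply: mulr_gt0.
  lra.
have : 0 < (b - a) / 2 * (Et ^+ 2 - W * H) by apply: mulr_gt0 => //; apply: divr_gt0; lra.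
rewrite -hid; lra.
Qed.

Theorem theorem5 (R : realFieldType) (N : nat) (E hlP hlO : 'I_N -> R) :
  (0 < N)%N ->
  (forall n, 0 < E n) ->
  (forall n, 0 <= hlP n) -> (forall n, 0 <= hlO n) ->
  (forall n, hlP n + hlO n = E n) ->
  Etot E / 2 <= totload hlP -> totload hlO <= Etot E / 2 ->
  (forall n, totload hlP / Etot E <= hlP n / E n + 1 / 2) ->
  (forall (a : R) (lP lO : 'I_N -> R), 0 <= a <= 1 ->
     is_NE E hlP hlO a lP lO ->
     SC E hlP hlO a lP lO = SC_formula E hlP hlO a) /\
  (forall (a b : R) (lP lO lP' lO' : 'I_N -> R),
     0 <= a -> a < b -> b <= 1 ->
     is_NE E hlP hlO a lP lO -> is_NE E hlP hlO b lP' lO' ->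
     SC E hlP hlO b lP' lO' < SC E hlP hlO a lP lO).
Proof.
move=> HN Ep hPp hOp hsum hPge hOle hcond.
have K := @key _ _ E hlP hlO HN Ep hPp hOp hsum hPge hOle hcond.
split => // a b lP lO lP' lO' a0 ab b1 NEa NEb.
rewrite (K b lP' lO') ?(K a lP lO) //; last by apply/andP; split; lra.
  2: by apply/andP; split; lra.
have Et0 := @Etot_gt0 _ _ E HN Ep.
have hHPO : totload hlP + totload hlO = Etot E.
  by rewrite /totload -big_split /=; apply: eq_bigr => n _; rewrite hsum.
have HP0 : 0 <= totload hlP by apply: sumr_ge0 => n _.
have HO0 : 0 <= totload hlO by apply: sumr_ge0 => n _.
rewrite /SC_formula; apply: mono => //.
- exact: sqr_ge0.
- rewrite /Dgap -hHPO -subr_ge0.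
  have -> : (totload hlP + totload hlO) ^+ 2 - (totload hlP - totload hlO) ^+ 2
     = 4 * (totload hlP * totload hlO) by ring.
  by apply: mulr_ge0 => //; apply: mulr_ge0.
- by apply: divr_ge0; [apply: sumr_ge0 => n _; apply: sqr_ge0 | apply: sqr_ge0].
- rewrite /VE ler_pdivrMr ?mul1r; first exact: sq_le.
  exact: exprn_gt0.
Qed.
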